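(* Let $\phi$ be a formula in $\mathsf F(\mathrm{LTL}[\mathsf O])$ and $\psi$ a formula in $\mathrm{LTL}[\mathsf X,\mathsf{wX},\mathsf F,\mathsf G]$. If $\phi\equiv_\omega\psi$, then $\psi\equiv_\omega\mathsf F\psi$.
   Context: Let $AP$ be a finite set of atomic propositions and $\Sigma=2^{AP}$. Formulae (negation normal form) are built from literals $p,\neg p$ ($p\in AP$) with $\land,\lor$ and temporal operators. Semantics on infinite traces $\sigma\in\Sigma^\omega$ at positions $i\in\mathbb N$: literals/Booleans as usual; $\mathsf X\phi$ and $\mathsf{wX}\phi$: $\phi$ holds at $i+1$; $\mathsf F\phi$/$\mathsf G\phi$: $\phi$ at some/every $j\ge i$; $\mathsf O\phi$: $\phi$ at some $0\le j\le i$. $\mathcal L^\omega(\phi)=\{\sigma\in\Sigma^\omega:\sigma,0\models\phi\}$; $\phi\equiv_\omega\psi$ iff $\mathcal L^\omega(\phi)=\mathcal L^\omega(\psi)$. $\mathrm{LTL}[S]$: formulae whose temporal operators lie in $S$; $\mathsf F(\mathrm{LTL}[\mathsf O])$: formulae $\mathsf F(\alpha)$ with $\alpha\in\mathrm{LTL}[\mathsf O]$. *)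

(* Defs.v *)
From mathcomp Require Import all_boot.
Set Implicit Arguments. Unset Strict Implicit. Unset Printing Implicit Defensive.

(* LTL formulae in negation normal form over a finite set AP of atomic
   propositions. Letters are Sigma = 2^AP = {set AP}; traces are infinite
   words nat -> {set AP}. *)
Section LTL.
Variable AP : finType.

Inductive form : Type :=
| Lit : AP -> form
| NLit : AP -> form
| And : form -> form -> form
| Or : form -> form -> form
| Next : form -> form
| WNext : form -> form
| Fin : form -> form
| Glob : form -> form
| Once : form -> form.

Definition trace := nat -> {set AP}.

Fixpoint sat (s : trace) (i : nat) (f : form) : Prop :=
  match f with
  | Lit p => p \in s i
  | NLit p => p \notin s i
  | And a b => sat s i a /\ sat s i b
  | Or a b => sat s i a \/ sat s i b
  | Next a => sat s i.+1 a
  | WNext a => sat s i.+1 a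
  | Fin a => exists j, i <= j /\ sat s j a
  | Glob a => forall j, i <= j -> sat s j a
  | Once a => exists j, j <= i /\ sat s j a
  end.

Definition in_lang (f : form) (s : trace) : Prop := sat s 0 f.
Definition equiv_omega (f g : form) : Prop := forall s, in_lang f s <-> in_lang g s.

Fixpoint is_LTL_O (f : form) : Prop :=
  match f with
  | Lit _ | NLit _ => True
  | And a b | Or a b => is_LTL_O a /\ is_LTL_O b
  | Once a => is_LTL_O a
  | _ => False
  end.

Definition is_F_LTL_O (f : form) : Prop :=
  exists a, f = Fin a /\ is_LTL_O a.

Fixpoint is_LTL_XwXFG (f : form) : Prop :=
  match f with
  | Lit _ | NLit _ => True
  | And a b | Or a b => is_LTL_XwXFG a /\ is_LTL_XwXFG b
  | Next a | WNext a | Fin a | Glob a => is_LTL_XwXFG a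
  | Once _ => False
  end.
End LTL.

(* Main.v *)
Require Import Defs.
From mathcomp Require Import all_boot.
From Stdlib Require Import Lia.
From mathcomp Require Import zify.

Definition shift {AP : finType} (j : nat) (s : trace AP) : trace AP := fun n => s (j + n).

Lemma fut_shift (AP : finType) (f : form AP) (s : trace AP) j :
  is_LTL_XwXFG f -> forall i, sat s (j + i) f -> sat (shift j s) i f.
Proof.
elim: f => //= [a IHa b IHb|a IHa b IHb|a IHa|a IHa|a IHa|a IHa] H i.
- by case: H => Ha Hb [H1 H2]; split; [apply: IHa|apply: IHb].
- by case: H => Ha Hb [H1|H2]; [left; apply: IHa|right; apply: IHb].
- by move=> Hs; apply: IHa => //; rewrite addnS.
- by move=> Hs; apply: IHa => //; rewrite addnS.
- move=> [m [Hm Hs]]; exists (m - j); split.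
    lia.
  apply: IHa => //; have -> : j + (m - j) = m by lia.
  done.
- move=> Hs m Hm; apply: IHa => //; apply: Hs.
  by lia.
Qed.

Lemma past_shift (AP : finType) (f : form AP) (s : trace AP) j :
  is_LTL_O f -> forall k, sat (shift j s) k f -> sat s (j + k) f.
Proof.
elim: f => //= [a IHa b IHb|a IHa b IHb|a IHa] H k.
- by case: H => Ha Hb [H1 H2]; split; [apply: IHa|apply: IHb].
- by case: H => Ha Hb [H1|H2]; [left; apply: IHa|right; apply: IHb].
- move=> [m [Hm Hs]]; exists (j + m); split.
    by lia.
  exact: IHa.
Qed.

Theorem lemma18 (AP : finType) (phi psi : form AP) :
  is_F_LTL_O phi -> is_LTL_XwXFG psi -> equiv_omega phi psi ->
  equiv_omega psi (Fin psi).
Proof.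
move=> [a [-> Ha]] Hpsi Heq s; split.
  by move=> H; exists 0; split.
move=> [j [_ Hj]].
have H1 : in_lang psi (shift j s).
  by apply: fut_shift => //; rewrite addn0.
move/Heq: H1 => [k [_ Hk]].
apply/Heq; exists (j + k); split => //.
exact: past_shift.
Qed.
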